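(* There is no computable probability measure $\xi$ on $2^\omega$ such that for every computable $c\in[0,1]$ we have $\mathsf{MLR}_\xi\cap\mathsf{MLR}_{\mu_c}\neq\emptyset$. (In the paper's words: there is no computable mixture of Bernoulli measures that includes all computable Bernoulli measures.)
   Context: For $p\in[0,1]$ the Bernoulli measure $\mu_p$ on $2^\omega$ is determined by $\mu_p(\llbracket\sigma\rrbracket)=p^{\#_0(\sigma)}(1-p)^{\#_1(\sigma)}$, where $\#_i(\sigma)$ is the number of occurrences of $i$ in $\sigma$. For computable $\mu$, $\mathsf{MLR}_\mu$ denotes the set of $\mu$-Martin-Löf random sequences. *)

(* Defs.v *)
From Stdlib Require Import Reals List Arith.
Import ListNotations.
Open Scope R_scope.

Inductive code : Type :=
| CZero : code
| CSucc : code
| CProj : nat -> code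
| CComp : code -> list code -> code
| CPrec : code -> code -> code
| CMu   : code -> code.

Inductive eval : code -> list nat -> nat -> Prop :=
| ev_zero : forall args, eval CZero args 0
| ev_succ : forall x args, eval CSucc (x :: args) (S x)
| ev_proj : forall i args, eval (CProj i) args (nth i args 0%nat)
| ev_comp : forall f gs args ys y,
    evals gs args ys -> eval f ys y -> eval (CComp f gs) args y
| ev_prec0 : forall f g args y,
    eval f args y -> eval (CPrec f g) (0%nat :: args) y
| ev_precS : forall f g n args r y,
    eval (CPrec f g) (n :: args) r ->
    eval g (n :: r :: args) y ->
    eval (CPrec f g) (S n :: args) y
| ev_mu : forall f args n,
    eval f (n :: args) 0%nat ->
    (forall m, (m < n)%nat -> exists k, eval f (m :: args) (S k)) ->
    eval (CMu f) args n
with evals : list code -> list nat -> list nat -> Prop :=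
| evs_nil : forall args, evals [] args []
| evs_cons : forall g gs args y ys,
    eval g args y -> evals gs args ys -> evals (g :: gs) args (y :: ys).

Definition computable1 (f : nat -> nat) : Prop :=
  exists c, forall x, eval c [x] (f x).
Definition computable2 (f : nat -> nat -> nat) : Prop :=
  exists c, forall x y, eval c [x; y] (f x y).

(* enumeration of pairs along diagonals *)
Fixpoint unpair (n : nat) : nat * nat :=
  match n with
  | O => (0%nat, 0%nat)
  | S n' => let (a, b) := unpair n' in
            match a with O => (S b, 0%nat) | S a' => (a', S b) end
  end.

(* integers coded by naturals: 0,-1,1,-2,2,... *)
Definition int_of_nat (a : nat) : R :=
  if Nat.even a then INR (Nat.div a 2) else - INR (Nat.div (a + 1) 2).

Definition rat_of_nat (n : nat) : R :=
  let (a, b) := unpair n in int_of_nat a / INR (S b).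

(* binary strings coded bijectively by naturals *)
Fixpoint code_str (s : list bool) : nat :=
  match s with
  | [] => 0%nat
  | b :: s' => (2 * code_str s' + (if b then 2 else 1))%nat
  end.

Definition computable_real (x : R) : Prop :=
  exists f : nat -> nat, computable1 f /\
    forall n, Rabs (rat_of_nat (f n) - x) <= / 2 ^ n.

(* A Borel probability measure on 2^omega is determined by its values on
   cylinders [sigma]; we represent it by sigma |-> mu([sigma]). *)
Definition is_prob_measure (mu : list bool -> R) : Prop :=
  mu [] = 1 /\
  (forall s, 0 <= mu s) /\
  (forall s, mu s = mu (s ++ [false]) + mu (s ++ [true])).

Definition computable_measure (mu : list bool -> R) : Prop :=
  exists f : nat -> nat -> nat, computable2 f /\
    forall s n, Rabs (rat_of_nat (f (code_str s) n) - mu s) <= / 2 ^ n.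

Definition count_bool (b : bool) (s : list bool) : nat :=
  length (filter (fun x => Bool.eqb x b) s).

Definition bernoulli (p : R) (s : list bool) : R :=
  p ^ count_bool false s * (1 - p) ^ count_bool true s.

Definition is_prefix (s t : list bool) : Prop := exists u, t = s ++ u.

Definition prefix_free (L : list (list bool)) : Prop :=
  NoDup L /\ forall s t, In s L -> In t L -> s <> t -> ~ is_prefix s t.

Definition sum_measure (mu : list bool -> R) (L : list (list bool)) : R :=
  fold_right (fun s acc => mu s + acc) 0 L.

(* mu([W]) <= r, where [W] is the open set generated by W *)
Definition open_measure_le (mu : list bool -> R) (W : list bool -> Prop) (r : R)
  : Prop :=
  forall L, prefix_free L -> (forall s, In s L -> W s) -> sum_measure mu L <= r.

Definition prefix (X : nat -> bool) (k : nat) : list bool := map X (seq 0 k).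

Definition in_open (W : list bool -> Prop) (X : nat -> bool) : Prop :=
  exists k, W (prefix X k).

Definition unif_ce (U : nat -> list bool -> Prop) : Prop :=
  exists c, forall n s, U n s <-> exists y, eval c [n; code_str s] y.

Definition ML_test (mu : list bool -> R) (U : nat -> list bool -> Prop) : Prop :=
  unif_ce U /\ forall n, open_measure_le mu (U n) (/ 2 ^ n).

Definition MLR (mu : list bool -> R) (X : nat -> bool) : Prop :=
  forall U, ML_test mu U -> exists n, ~ in_open (U n) X.

(* Main.v *)
Require Import Defs.
From Stdlib Require Import Reals List Arith Lia Lra Bool FunctionalExtensionality.
Import ListNotations.

Open Scope nat_scope.

Section Den.
Variable fx : nat -> nat -> nat.

Fixpoint denote (c : code) (l : list nat) {struct c} : nat :=
  match c with
  | CZero => 0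
  | CSucc => S (nth 0 l 0)
  | CProj i => nth i l 0
  | CComp f gs => denote f (map (fun g => denote g l) gs)
  | CPrec f g =>
      match l with
      | [] => 0
      | n :: ps => nat_rect (fun _ => nat) (denote f ps)
                     (fun m r => denote g (m :: r :: ps)) n
      end
  | CMu _ => fx (nth 0 l 0) (nth 1 l 0)
  end.
End Den.

Fixpoint prb (c : code) : bool :=
  match c with
  | CZero => true
  | CSucc => false
  | CProj _ => true
  | CComp f gs =>
      (match f with
       | CSucc => negb (Nat.eqb (length gs) 0)
       | CMu _ => Nat.eqb (length gs) 2
       | CPrec f' g' => negb (Nat.eqb (length gs) 0) && prb f' && prb g'
       | _ => prb f
       end) &&
      (fix all gs := match gs with [] => true | g :: gs => prb g && all gs end) gs
  | CPrec _ _ => false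
  | CMu _ => false
  end.

Fixpoint subst (cx : code) (c : code) : code :=
  match c with
  | CComp f gs => CComp (subst cx f) (map (subst cx) gs)
  | CPrec f g => CPrec (subst cx f) (subst cx g)
  | CMu _ => cx
  | c => c
  end.

Lemma prec_eval cx f g F G :
  (forall l, eval (subst cx f) l (F l)) ->
  (forall l, eval (subst cx g) l (G l)) ->
  forall n ps, eval (CPrec (subst cx f) (subst cx g)) (n :: ps)
     (nat_rect (fun _ => nat) (F ps) (fun m r => G (m :: r :: ps)) n).
Proof.
  intros Hf Hg n ps; induction n; simpl.
  - constructor; auto.
  - econstructor; eauto.
Qed.

Theorem prb_eval (cx : code) (fx : nat -> nat -> nat) :
  (forall x y, eval cx [x; y] (fx x y)) ->
  forall c, prb c = true -> forall l, eval (subst cx c) l (denote fx c l).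
Proof.
  intros Hcx.
  fix IH 1.
  intros c Hc l; destruct c as [| | i | f gs | f g | f]; simpl in Hc; try discriminate.
  - constructor.
  - simpl. constructor.
  - apply andb_prop in Hc as [Hf Hgs].
    assert (Hall : forall l, evals (map (subst cx) gs) l (map (fun g => denote fx g l) gs)).
    { clear Hf. revert Hgs. generalize gs. fix IHl 1. intros gs0 Hgs l'. destruct gs0 as [|g gs0].
      - constructor.
      - simpl in Hgs. apply andb_prop in Hgs as [H1 H2].
        simpl. constructor; [apply IH; exact H1 | apply IHl; exact H2]. }
    pose proof (IH f) as IHf.
    simpl. destruct f as [| | i | f1 gs1 | f1 g1 | f1].
    + econstructor; [apply Hall|]. constructor.
    + destruct gs as [|g gs]; [discriminate|].
      econstructor; [apply Hall|]. simpl. constructor.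
    + econstructor; [apply Hall|]. constructor.
    + econstructor; [apply Hall|]. apply IHf. exact Hf.
    + apply andb_prop in Hf as [Hf Hg1]. apply andb_prop in Hf as [Hne Hf1].
      econstructor; [apply Hall|].
      destruct gs as [|g gs]; [discriminate|]. simpl.
      apply (prec_eval cx f1 g1 (denote fx f1) (denote fx g1)).
      * intros; apply IH; exact Hf1.
      * intros; apply IH; exact Hg1.
    + destruct gs as [|g1 [|g2 [|g3 gs]]]; try discriminate.
      econstructor; [apply Hall|]. simpl. apply Hcx.
Qed.





Fixpoint eval_det c l y (H : eval c l y) {struct H} : forall y', eval c l y' -> y = y'
with evals_det cs l ys (H : evals cs l ys) {struct H} : forall ys', evals cs l ys' -> ys = ys'.
Proof.
  - destruct H as [args|x args|i args|f gs args ys y Hgs Hf|f g args y Hf|f g n args r y Hr Hg|f args n Hf Hlt];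
      intros y' H'; inversion H'; subst; auto.
    + match goal with H1 : evals gs args ?z |- _ =>
        assert (E : ys = z) by (exact (evals_det _ _ _ Hgs _ H1)) end. subst.
      match goal with H1 : eval f _ y' |- _ => exact (eval_det _ _ _ Hf _ H1) end.
    + match goal with H1 : eval f args y' |- _ => exact (eval_det _ _ _ Hf _ H1) end.
    + match goal with H1 : eval (CPrec f g) _ ?z |- _ =>
        assert (E : r = z) by (exact (eval_det _ _ _ Hr _ H1)) end. subst.
      match goal with H1 : eval g _ y' |- _ => exact (eval_det _ _ _ Hg _ H1) end.
    + rename y' into n'.
      match goal with H1 : forall m, m < n' -> _ |- _ => rename H1 into Hlt' end.
      match goal with H1 : eval f (n' :: args) 0 |- _ => rename H1 into Hf' end.
      destruct (Nat.lt_trichotomy n n') as [Hl|[Hl|Hl]]; auto.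
      * destruct (Hlt' n Hl) as [k Hk]. apply (eval_det _ _ _ Hf) in Hk. discriminate.
      * destruct (Hlt n' Hl) as [k Hk]. apply (eval_det _ _ _ Hk) in Hf'. discriminate.
  - destruct H as [args|g gs args y ys Hg Hgs]; intros ys' H'; inversion H'; subst; auto.
    match goal with H1 : eval g args ?z, H2 : evals gs args ?zs |- _ =>
      f_equal; [exact (eval_det _ _ _ Hg _ H1) | exact (evals_det _ _ _ Hgs _ H2)] end.
Qed.

Open Scope nat_scope.

Definition P i := CProj i.
Fixpoint Kc n := match n with 0 => CZero | S n => CComp CSucc [Kc n] end.
Definition Sc a := CComp CSucc [a].
Definition REC b s cnt ps := CComp (CPrec b s) (cnt :: ps).
Definition XI a b := CComp (CMu CZero) [a; b].

Fixpoint nsum n (f : nat -> nat) := match n with 0 => 0 | S n => nsum n f + f n end.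
Fixpoint findf n (f : nat -> nat) :=
  match n with 0 => 0
  | S n => let r := findf n f in r + (if r =? n then (if f n =? 0 then 1 else 0) else 0) end.

Definition c_add := REC (P 0) (Sc (P 1)) (P 0) [P 1].
Definition Addc a b := CComp c_add [a; b].
Definition c_mul := REC (Kc 0) (Addc (P 1) (P 2)) (P 0) [P 1].
Definition Mulc a b := CComp c_mul [a; b].
Definition c_pred := REC (Kc 0) (P 0) (P 0) [].
Definition Predc a := CComp c_pred [a].
Definition c_sub := REC (P 0) (Predc (P 1)) (P 1) [P 0].
Definition Subc a b := CComp c_sub [a; b].
Definition c_pow2 := REC (Kc 1) (Addc (P 1) (P 1)) (P 0) [].
Definition Pow2c a := CComp c_pow2 [a].
Definition c_isz := REC (Kc 1) (Kc 0) (P 0) [].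
Definition Iszc a := CComp c_isz [a].
Definition Lebc a b := Iszc (Subc a b).
Definition Ltbc a b := Lebc (Sc a) b.
Definition Eqbc a b := Mulc (Lebc a b) (Lebc b a).
Definition Nzc a := Iszc (Iszc a).
Definition Itec c a b := Addc (Mulc (Nzc c) a) (Mulc (Iszc c) b).
Definition shiftps (k : nat) := map (fun i => P (S (S i))) (seq 0 k).
Definition SumC F cnt ps :=
  REC (Kc 0) (Addc (P 1) (CComp F (P 0 :: shiftps (length ps)))) cnt ps.
Definition FindC F cnt ps :=
  REC (Kc 0) (Addc (P 1) (Mulc (Eqbc (P 1) (P 0)) (Iszc (CComp F (P 0 :: shiftps (length ps)))))) cnt ps.
Definition c_div := SumC (Lebc (Mulc (Sc (P 0)) (P 2)) (P 1)) (P 0) [P 0; P 1].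
Definition Divc a b := CComp c_div [a; b].

Arguments P : simpl never.
Arguments Sc : simpl never.
Arguments XI : simpl never.
Arguments REC : simpl never.
Arguments Addc : simpl never.
Arguments Mulc : simpl never.
Arguments Predc : simpl never.
Arguments Subc : simpl never.
Arguments Pow2c : simpl never.
Arguments Iszc : simpl never.
Arguments Lebc : simpl never.
Arguments Ltbc : simpl never.
Arguments Eqbc : simpl never.
Arguments Nzc : simpl never.
Arguments Itec : simpl never.
Arguments SumC : simpl never.
Arguments FindC : simpl never.
Arguments Divc : simpl never.


Lemma nsum_ext n f g : (forall i, i < n -> f i = g i) -> nsum n f = nsum n g.
Proof. induction n; cbn [nsum]; intros; auto. rewrite IHn, H; auto. Qed.

Lemma nsum_lt n q : nsum n (fun k => if k <? q then 1 else 0) = Nat.min n q.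
Proof. induction n; cbn [nsum]; [lia|]. rewrite IHn. destruct (n <? q) eqn:E;
  [apply Nat.ltb_lt in E | apply Nat.ltb_ge in E]; lia. Qed.

Lemma div_count x y : 0 < y ->
  nsum x (fun k => if S k * y <=? x then 1 else 0) = x / y.
Proof.
  intros Hy. rewrite (nsum_ext _ _ (fun k => if k <? x / y then 1 else 0)).
  - rewrite nsum_lt. assert (x / y <= x) by (apply Nat.Div0.div_le_upper_bound; nia). lia.
  - intros i _. destruct (S i * y <=? x) eqn:E; destruct (i <? x / y) eqn:F; auto.
    + apply Nat.leb_le in E. apply Nat.ltb_ge in F.
      assert (S i <= x / y) by (apply Nat.div_le_lower_bound; lia). lia.
    + apply Nat.leb_gt in E. apply Nat.ltb_lt in F.
      assert (y * (x / y) <= x) by (apply Nat.mul_div_le; lia). nia.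
Qed.
Section Den.
Variable fx : nat -> nat -> nat.
Notation den := (denote fx).

Lemma den_P i l : den (P i) l = nth i l 0. Proof. reflexivity. Qed.
Lemma den_K n l : den (Kc n) l = n. Proof. induction n; simpl; auto. Qed.
Lemma den_S a l : den (Sc a) l = S (den a l). Proof. reflexivity. Qed.
Lemma den_XI a b l : den (XI a b) l = fx (den a l) (den b l). Proof. reflexivity. Qed.
Lemma den_REC b s cnt ps l : den (REC b s cnt ps) l =
  nat_rect (fun _ => nat) (den b (map (fun g => den g l) ps))
    (fun m r => den s (m :: r :: map (fun g => den g l) ps)) (den cnt l).
Proof. reflexivity. Qed.

Lemma den_C f gs l : den (CComp f gs) l = den f (map (fun g => den g l) gs).
Proof. reflexivity. Qed.

Ltac dsimp := repeat (rewrite ?den_C, ?den_REC, ?den_P, ?den_K, ?den_S; cbn [map nth]).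

Lemma den_Add a b l : den (Addc a b) l = den a l + den b l.
Proof. unfold Addc, c_add. dsimp. induction (den a l); cbn [nat_rect]; dsimp; auto. rewrite IHn. auto. Qed.
Lemma den_Mul a b l : den (Mulc a b) l = den a l * den b l.
Proof. unfold Mulc, c_mul. dsimp. induction (den a l); cbn [nat_rect]; dsimp; auto.
  rewrite den_Add. dsimp. rewrite IHn. lia. Qed.
Lemma den_Pred a l : den (Predc a) l = pred (den a l).
Proof. unfold Predc, c_pred. dsimp. destruct (den a l); cbn [nat_rect]; dsimp; auto. Qed.
Lemma den_Sub a b l : den (Subc a b) l = den a l - den b l.
Proof. unfold Subc, c_sub. dsimp. induction (den b l); cbn [nat_rect]; dsimp; [lia|].
  rewrite den_Pred. dsimp. rewrite IHn. lia. Qed.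
Lemma den_Pow2 a l : den (Pow2c a) l = 2 ^ den a l.
Proof. unfold Pow2c, c_pow2. dsimp. induction (den a l); cbn [nat_rect]; dsimp; auto.
  rewrite den_Add. dsimp. rewrite IHn. simpl. lia. Qed.
Lemma den_Isz a l : den (Iszc a) l = if den a l =? 0 then 1 else 0.
Proof. unfold Iszc, c_isz. dsimp. destruct (den a l); cbn [nat_rect]; dsimp; auto. Qed.
Lemma den_Leb a b l : den (Lebc a b) l = if den a l <=? den b l then 1 else 0.
Proof. unfold Lebc. rewrite den_Isz, den_Sub.
  destruct (den a l <=? den b l) eqn:E; [apply Nat.leb_le in E|apply Nat.leb_gt in E];
  destruct (den a l - den b l =? 0) eqn:F; auto;
  [apply Nat.eqb_neq in F | apply Nat.eqb_eq in F]; lia. Qed.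
Lemma den_Ltb a b l : den (Ltbc a b) l = if den a l <? den b l then 1 else 0.
Proof. unfold Ltbc. rewrite den_Leb, den_S. reflexivity. Qed.
Lemma den_Eqb a b l : den (Eqbc a b) l = if den a l =? den b l then 1 else 0.
Proof. unfold Eqbc. rewrite den_Mul, !den_Leb.
  destruct (den a l =? den b l) eqn:E; [apply Nat.eqb_eq in E|apply Nat.eqb_neq in E].
  - rewrite E, Nat.leb_refl. auto.
  - destruct (den a l <=? den b l) eqn:E1; destruct (den b l <=? den a l) eqn:E2; auto.
    apply Nat.leb_le in E1, E2. lia. Qed.
Lemma den_Nz a l : den (Nzc a) l = if den a l =? 0 then 0 else 1.
Proof. unfold Nzc. rewrite !den_Isz. destruct (den a l =? 0); auto. Qed.
Lemma den_Ite c a b l : den (Itec c a b) l = if den c l =? 0 then den b l else den a l.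
Proof. unfold Itec. rewrite den_Add, !den_Mul, den_Nz, den_Isz.
  destruct (den c l =? 0); lia. Qed.

Lemma shiftps_den k m r vs : length vs = k ->
  map (fun g => den g (m :: r :: vs)) (shiftps k) = vs.
Proof.
  intros <-. unfold shiftps. rewrite map_map. simpl.
  induction vs as [|v vs IH] using rev_ind; auto.
  rewrite length_app, seq_app, map_app. simpl.
  rewrite app_nth2 by lia. rewrite Nat.sub_diag. simpl. f_equal.
  rewrite <- IH at 2. apply map_ext_in. intros a Ha. apply in_seq in Ha.
  rewrite app_nth1 by lia. reflexivity.
Qed.

Lemma den_SumC F cnt ps l : den (SumC F cnt ps) l =
  nsum (den cnt l) (fun i => den F (i :: map (fun g => den g l) ps)).
Proof.
  unfold SumC. rewrite den_REC. induction (den cnt l); cbn [nat_rect].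
  { rewrite den_K. auto. }
  rewrite den_Add, IHn, den_P, den_C. cbn [map nth nsum]. f_equal. rewrite den_P. cbn [nth].
  rewrite shiftps_den; auto. rewrite length_map. auto.
Qed.

Lemma den_FindC F cnt ps l : den (FindC F cnt ps) l =
  findf (den cnt l) (fun i => den F (i :: map (fun g => den g l) ps)).
Proof.
  unfold FindC. rewrite den_REC. induction (den cnt l); cbn [nat_rect].
  { rewrite den_K. auto. }
  rewrite den_Add, den_Mul, den_Eqb, den_Isz, !den_P, den_C. cbn [map nth]. rewrite IHn. cbn [findf].
  rewrite den_P. cbn [nth].
  rewrite shiftps_den by (rewrite length_map; auto).
  destruct (_ =? n); destruct (_ =? 0); lia.
Qed.

Lemma den_Div a b l : 0 < den b l -> den (Divc a b) l = den a l / den b l.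
Proof.
  intros Hb. unfold Divc. rewrite den_C. unfold c_div. rewrite den_SumC. cbn [map].
  rewrite den_P. cbn [nth]. rewrite <- div_count by auto. apply nsum_ext. intros i _.
  rewrite den_Leb, den_Mul, den_S, !den_P. reflexivity.
Qed.
End Den.

Open Scope nat_scope.

Definition T2 d := d * S d.

Lemma T2_mono d d' : d <= d' -> T2 d <= T2 d'.
Proof. unfold T2; nia. Qed.

Lemma unpair_spec n : 2 * n = T2 (fst (unpair n) + snd (unpair n)) + 2 * snd (unpair n).
Proof.
  induction n; simpl; auto.
  destruct (unpair n) as [a b]; simpl in *. destruct a; simpl; unfold T2 in *; nia.
Qed.

Lemma T2_split D b D' b' : b <= D -> b' <= D' -> T2 D + 2 * b = T2 D' + 2 * b' -> D = D' /\ b = b'.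
Proof.
  intros H1 H2 H3.
  assert (D = D').
  { destruct (Nat.lt_trichotomy D D') as [h|[h|h]]; auto.
    - assert (T2 (S D) <= T2 D') by (apply T2_mono; lia). unfold T2 in *; nia.
    - assert (T2 (S D') <= T2 D) by (apply T2_mono; lia). unfold T2 in *; nia. }
  subst; split; auto; lia.
Qed.

Definition ud n := nsum n (fun i => if S i * S (S i) <=? 2 * n then 1 else 0).
Definition UB n := n - T2 (ud n) / 2.
Definition UA n := ud n - UB n.

Lemma T2_even d : T2 d / 2 * 2 = T2 d.
Proof.
  unfold T2. induction d. simpl; auto.
  replace (S d * S (S d)) with (d * S d + (d + 1) * 2) by nia.
  rewrite Nat.div_add by lia. set (q := d * S d / 2) in *. set (r := d * S d) in *. lia.
Qed.

Lemma ud_spec n : ud n = fst (unpair n) + snd (unpair n).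
Proof.
  pose proof (unpair_spec n) as H.
  destruct (unpair n) as [a b]; simpl in *.
  unfold ud. rewrite (nsum_ext _ _ (fun i => if i <? a + b then 1 else 0)).
  - rewrite nsum_lt. assert (a + b <= n) by (unfold T2 in H; nia). lia.
  - intros i _. destruct (S i * S (S i) <=? 2 * n) eqn:E; destruct (i <? a + b) eqn:F; auto.
    + apply Nat.leb_le in E. apply Nat.ltb_ge in F. unfold T2 in H. nia.
    + apply Nat.leb_gt in E. apply Nat.ltb_lt in F. unfold T2 in H. nia.
Qed.

Lemma UAB_spec n : unpair n = (UA n, UB n).
Proof.
  pose proof (unpair_spec n) as H. pose proof (ud_spec n) as H2.
  unfold UA, UB. rewrite H2. destruct (unpair n) as [a b]; cbn [fst snd] in *.
  pose proof (T2_even (a + b)).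
  assert (T2 (a+b) / 2 + b = n) by lia.
  f_equal; lia.
Qed.

Definition pr a b := T2 (a + b) / 2 + b.

Lemma unpair_pr a b : unpair (pr a b) = (a, b).
Proof.
  pose proof (unpair_spec (pr a b)) as H.
  destruct (unpair (pr a b)) as [a' b'] eqn:E; simpl in *.
  unfold pr in H. pose proof (T2_even (a + b)).
  assert (T2 (a' + b') + 2 * b' = T2 (a + b) + 2 * b) by lia.
  apply T2_split in H1; try lia. destruct H1. f_equal; lia.
Qed.

(* binary values of strings, first element = lowest bit *)
Fixpoint tv (s : list bool) : nat :=
  match s with [] => 0 | b :: s => (if b then 1 else 0) + 2 * tv s end.

Lemma code_str_tv (s : list bool) : code_str s + 1 = tv s + 2 ^ length s.
Proof. induction s as [|b s IH]; simpl; auto. destruct b; simpl; lia. Qed.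

Lemma tv_lt (s : list bool) : tv s < 2 ^ length s.
Proof. induction s as [|b s IH]; simpl; auto. destruct b; lia. Qed.

Definition bit t i := (t / 2 ^ i) mod 2.
Definition pop t L := nsum L (fun i => bit t i).

Lemma nsum_shift n f : nsum (S n) f = f 0 + nsum n (fun i => f (S i)).
Proof. induction n; cbn [nsum] in *; auto. rewrite IHn. cbn [nsum]. lia. Qed.

Lemma bit_cons (b : bool) t i : bit ((if b then 1 else 0) + 2 * t) (S i) = bit t i.
Proof.
  unfold bit. rewrite Nat.pow_succ_r', <- Nat.Div0.div_div.
  f_equal. f_equal. replace ((if b then 1 else 0) + 2 * t) with ((if b then 1 else 0) + t * 2) by lia.
  rewrite Nat.div_add by lia. destruct b; simpl; auto.
Qed.

Lemma bit_cons0 (b : bool) t : bit ((if b then 1 else 0) + 2 * t) 0 = if b then 1 else 0.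
Proof.
  unfold bit. simpl (2^0). rewrite Nat.div_1_r. rewrite Nat.mul_comm, Nat.Div0.mod_add.
  destruct b; auto.
Qed.

Definition count_b b s := count_bool b s.

Lemma pop_tv (s : list bool) : pop (tv s) (length s) = count_bool true s.
Proof.
  induction s as [|b s IH]; [reflexivity|]. unfold pop in *. cbn [tv length].
  rewrite nsum_shift.
  rewrite bit_cons0. rewrite (nsum_ext _ _ (fun i => bit (tv s) i)) by (intros; apply bit_cons).
  rewrite IH. unfold count_bool. destruct b; simpl; auto.
Qed.

Lemma count_ft (s : list bool) : count_bool false s + count_bool true s = length s.
Proof. induction s as [|b s IH]; simpl; auto. unfold count_bool in *; destruct b; simpl; lia. Qed.

Definition ell x := nsum x (fun i => if 2 ^ S i <=? S x then 1 else 0).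

Lemma ell_code (s : list bool) : ell (code_str s) = length s.
Proof.
  pose proof (code_str_tv s). pose proof (tv_lt s).
  set (x := code_str s) in *. set (L := length s) in *.
  unfold ell. rewrite (nsum_ext _ _ (fun i => if i <? L then 1 else 0)).
  - rewrite nsum_lt. assert (L < 2 ^ L) by (apply Nat.pow_gt_lin_r; lia). lia.
  - intros i _. destruct (2 ^ S i <=? S x) eqn:E; destruct (i <? L) eqn:F; auto.
    + apply Nat.leb_le in E. apply Nat.ltb_ge in F.
      assert (HH : 2 ^ S L <= 2 ^ S i) by (apply Nat.pow_le_mono_r; lia).
      rewrite Nat.pow_succ_r' in HH. lia.
    + apply Nat.leb_gt in E. apply Nat.ltb_lt in F.
      assert (2 ^ S i <= 2 ^ L) by (apply Nat.pow_le_mono_r; lia). lia.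
Qed.

Definition Zx x := ell x - pop (S x - 2 ^ ell x) (ell x).

Lemma Zx_code (s : list bool) : Zx (code_str s) = count_bool false s.
Proof.
  unfold Zx. rewrite ell_code. pose proof (code_str_tv s).
  replace (S (code_str s) - 2 ^ length s) with (tv s) by lia.
  rewrite pop_tv. pose proof (count_ft s). lia.
Qed.

Open Scope nat_scope.

Section Spec.
Variable fx : nat -> nat -> nat.

Definition Nv x p := let n := fx x p in
  if 2 * (UA n / 2) =? UA n then (UA n / 2 * 2 ^ p) / S (UB n) else 0.
Definition Em m := (m + 2) * (m + 2) - 3.
Definition Fm m := Em m + 2 * m + 3.
Definition Lm m := 2 ^ (m + 2 * (Fm m + 2)).
Definition pm m := Lm m + 2 * m + 6.
Definition Km m := 2 ^ (2 * m + 4).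
Definition Bm m A := A * 2 ^ (2 * m + 3).
Definition core m A j Z :=
  (if Lm m * (Bm m A + j) <=? Z * 2 ^ Fm m then 1 else 0) *
  (if Z * 2 ^ Fm m <? Lm m * (Bm m A + j + 1) then 1 else 0).
Definition mass m A j := nsum (2 ^ Lm m)
  (fun t => core m A j (Lm m - pop t (Lm m)) * Nv (t + 2 ^ Lm m - 1) (pm m)).
Definition jsel m A := findf (Km m) (fun j => if mass m A j <=? 3 * 2 ^ S (Lm m) then 1 else 0).
Definition Ast m := nat_rect (fun _ => nat) 0 (fun m A => 4 * (Bm m A + jsel m A) + 1) m.
Definition coreX m x := core m (Ast m) (jsel m (Ast m)) (Zx x).
Definition Vcnt n x := nsum (S x) (fun m =>
  (if n <? m then 1 else 0) * (if Lm m =? ell x then 1 else 0) * coreX m x).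
Definition Ucnt n x := nsum (S x) (fun m =>
  (if n <? m then 1 else 0) * (if Lm m =? ell x then 1 else 0) * (1 - coreX m x)).
Definition gc n := pr (2 * Ast n) (2 ^ Em n - 1).
End Spec.

Definition c_ud := SumC (Lebc (Mulc (Sc (P 0)) (Sc (Sc (P 0)))) (Mulc (Kc 2) (P 1))) (P 0) [P 0].
Definition c_T2half := Divc (Mulc (P 0) (Sc (P 0))) (Kc 2).
Definition c_UB := Subc (P 0) (CComp c_T2half [CComp c_ud [P 0]]).
Definition c_UA := Subc (CComp c_ud [P 0]) (CComp c_UB [P 0]).
Definition c_Nv :=
  let nn := XI (P 0) (P 1) in let A := CComp c_UA [nn] in let B := CComp c_UB [nn] in
  Itec (Eqbc (Mulc (Kc 2) (Divc A (Kc 2))) A) (Divc (Mulc (Divc A (Kc 2)) (Pow2c (P 1))) (Sc B)) (Kc 0).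
Definition c_bit := Subc (Divc (P 0) (Pow2c (P 1))) (Mulc (Kc 2) (Divc (Divc (P 0) (Pow2c (P 1))) (Kc 2))).
Definition c_pop := SumC (CComp c_bit [P 1; P 0]) (P 1) [P 0].
Definition c_Em := Subc (Mulc (Sc (Sc (P 0))) (Sc (Sc (P 0)))) (Kc 3).
Definition c_Fm := Addc (CComp c_Em [P 0]) (Addc (Mulc (Kc 2) (P 0)) (Kc 3)).
Definition c_Lm := Pow2c (Addc (P 0) (Mulc (Kc 2) (Addc (CComp c_Fm [P 0]) (Kc 2)))).
Definition c_pm := Addc (CComp c_Lm [P 0]) (Addc (Mulc (Kc 2) (P 0)) (Kc 6)).
Definition c_Km := Pow2c (Addc (Mulc (Kc 2) (P 0)) (Kc 4)).
Definition c_Bm := Mulc (P 1) (Pow2c (Addc (Mulc (Kc 2) (P 0)) (Kc 3))).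
Definition c_core :=
  let L := CComp c_Lm [P 0] in let B := CComp c_Bm [P 0; P 1] in
  let ZF := Mulc (P 3) (Pow2c (CComp c_Fm [P 0])) in
  Mulc (Lebc (Mulc L (Addc B (P 2))) ZF) (Ltbc ZF (Mulc L (Addc (Addc B (P 2)) (Kc 1)))).
Definition c_mass :=
  let Lm' := CComp c_Lm [P 1] in
  SumC (Mulc (CComp c_core [P 1; P 2; P 3; Subc Lm' (CComp c_pop [P 0; Lm'])])
            (CComp c_Nv [Subc (Addc (P 0) (Pow2c Lm')) (Kc 1); CComp c_pm [P 1]]))
       (Pow2c (CComp c_Lm [P 0])) [P 0; P 1; P 2].
Definition c_jsel :=
  FindC (Lebc (CComp c_mass [P 1; P 2; P 0]) (Mulc (Kc 3) (Pow2c (Sc (CComp c_Lm [P 1])))))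
        (CComp c_Km [P 0]) [P 0; P 1].
Definition c_Ast :=
  REC (Kc 0) (Addc (Mulc (Kc 4) (Addc (CComp c_Bm [P 0; P 1]) (CComp c_jsel [P 0; P 1]))) (Kc 1)) (P 0) [].
Definition c_ell := SumC (Lebc (Pow2c (Sc (P 0))) (Sc (P 1))) (P 0) [P 0].
Definition c_Zx := let E := CComp c_ell [P 0] in Subc E (CComp c_pop [Subc (Sc (P 0)) (Pow2c E); E]).
Definition c_coreX := let AA := CComp c_Ast [P 0] in
  CComp c_core [P 0; AA; CComp c_jsel [P 0; AA]; CComp c_Zx [P 1]].
Definition c_Vcnt := SumC (Mulc (Mulc (Ltbc (P 1) (P 0)) (Eqbc (CComp c_Lm [P 0]) (CComp c_ell [P 2])))
   (CComp c_coreX [P 0; P 2])) (Sc (P 1)) [P 0; P 1].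
Definition c_Ucnt := SumC (Mulc (Mulc (Ltbc (P 1) (P 0)) (Eqbc (CComp c_Lm [P 0]) (CComp c_ell [P 2])))
   (Subc (Kc 1) (CComp c_coreX [P 0; P 2]))) (Sc (P 1)) [P 0; P 1].
Definition c_pr := Addc (CComp c_T2half [Addc (P 0) (P 1)]) (P 1).
Definition c_gc := CComp c_pr [Mulc (Kc 2) (CComp c_Ast [P 0]); Subc (Pow2c (CComp c_Em [P 0])) (Kc 1)].

Lemma prb_all : prb c_gc = true /\ prb c_Vcnt = true /\ prb c_Ucnt = true.
Proof. vm_compute. auto. Qed.

Hint Rewrite den_C den_P den_K den_S den_XI den_Add den_Mul den_Pred den_Sub den_Pow2
  den_Isz den_Leb den_Ltb den_Eqb den_Nz den_Ite : den.
Ltac dn := repeat (progress (autorewrite with den; cbn [map nth])).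
Ltac ddiv := rewrite den_Div; [|dn; try lia; try (apply Nat.neq_0_lt_0, Nat.pow_nonzero; lia)].
Ltac ddivs := repeat (dn; ddiv); dn.

Section DenSpec.
Variable fx : nat -> nat -> nat.
Notation den := (denote fx).

Lemma den_ud l : den c_ud l = ud (nth 0 l 0).
Proof. unfold c_ud. rewrite den_SumC. dn. apply nsum_ext. intros. dn. reflexivity. Qed.
Hint Rewrite den_ud : den.
Lemma den_T2half l : den c_T2half l = T2 (nth 0 l 0) / 2.
Proof. unfold c_T2half. ddivs. reflexivity. Qed.
Hint Rewrite den_T2half : den.
Lemma den_UB l : den c_UB l = UB (nth 0 l 0).
Proof. unfold c_UB. dn. reflexivity. Qed.
Hint Rewrite den_UB : den.
Lemma den_UA l : den c_UA l = UA (nth 0 l 0).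
Proof. unfold c_UA. dn. reflexivity. Qed.
Hint Rewrite den_UA : den.
Lemma den_Nv l : den c_Nv l = Nv fx (nth 0 l 0) (nth 1 l 0).
Proof. unfold c_Nv, Nv. ddivs.
  destruct (2 * (UA _ / 2) =? UA _); reflexivity. Qed.
Hint Rewrite den_Nv : den.
Lemma den_bit l : den c_bit l = bit (nth 0 l 0) (nth 1 l 0).
Proof. unfold c_bit, bit. ddivs. rewrite Nat.Div0.mod_eq. reflexivity. Qed.
Hint Rewrite den_bit : den.
Lemma den_pop l : den c_pop l = pop (nth 0 l 0) (nth 1 l 0).
Proof. unfold c_pop, pop. rewrite den_SumC. dn. apply nsum_ext. intros. dn. reflexivity. Qed.
Hint Rewrite den_pop : den.
Lemma den_Em l : den c_Em l = Em (nth 0 l 0).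
Proof. unfold c_Em, Em. dn. f_equal. lia. Qed.
Hint Rewrite den_Em : den.
Lemma den_Fm l : den c_Fm l = Fm (nth 0 l 0).
Proof. unfold c_Fm, Fm. dn. lia. Qed.
Hint Rewrite den_Fm : den.
Lemma den_Lm l : den c_Lm l = Lm (nth 0 l 0).
Proof. unfold c_Lm, Lm. dn. reflexivity. Qed.
Hint Rewrite den_Lm : den.
Lemma den_pm l : den c_pm l = pm (nth 0 l 0).
Proof. unfold c_pm, pm. dn. lia. Qed.
Hint Rewrite den_pm : den.
Lemma den_Km l : den c_Km l = Km (nth 0 l 0).
Proof. unfold c_Km, Km. dn. reflexivity. Qed.
Hint Rewrite den_Km : den.
Lemma den_Bm l : den c_Bm l = Bm (nth 0 l 0) (nth 1 l 0).
Proof. unfold c_Bm, Bm. dn. reflexivity. Qed.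
Hint Rewrite den_Bm : den.
Lemma den_core l : den c_core l = core (nth 0 l 0) (nth 1 l 0) (nth 2 l 0) (nth 3 l 0).
Proof. unfold c_core, core. dn. reflexivity. Qed.
Hint Rewrite den_core : den.
Lemma den_mass l : den c_mass l = mass fx (nth 0 l 0) (nth 1 l 0) (nth 2 l 0).
Proof. unfold c_mass, mass. rewrite den_SumC. dn. apply nsum_ext. intros. dn. reflexivity. Qed.
Hint Rewrite den_mass : den.
Lemma den_jsel l : den c_jsel l = jsel fx (nth 0 l 0) (nth 1 l 0).
Proof. unfold c_jsel, jsel. rewrite den_FindC. dn. f_equal. apply functional_extensionality.
  intros. dn. reflexivity. Qed.
Hint Rewrite den_jsel : den.
Lemma den_Ast l : den c_Ast l = Ast fx (nth 0 l 0).
Proof. unfold c_Ast, Ast. rewrite den_REC. dn. induction (nth 0 l 0); cbn [nat_rect]; auto.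
  dn. rewrite IHn. reflexivity. Qed.
Hint Rewrite den_Ast : den.
Lemma den_ell l : den c_ell l = ell (nth 0 l 0).
Proof. unfold c_ell, ell. rewrite den_SumC. dn. apply nsum_ext. intros. dn. reflexivity. Qed.
Hint Rewrite den_ell : den.
Lemma den_Zx l : den c_Zx l = Zx (nth 0 l 0).
Proof. unfold c_Zx, Zx. dn. reflexivity. Qed.
Hint Rewrite den_Zx : den.
Lemma den_coreX l : den c_coreX l = coreX fx (nth 0 l 0) (nth 1 l 0).
Proof. unfold c_coreX, coreX. dn. reflexivity. Qed.
Hint Rewrite den_coreX : den.
Lemma den_Vcnt l : den c_Vcnt l = Vcnt fx (nth 0 l 0) (nth 1 l 0).
Proof. unfold c_Vcnt, Vcnt. rewrite den_SumC. dn. apply nsum_ext. intros. dn. reflexivity. Qed.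
Lemma den_Ucnt l : den c_Ucnt l = Ucnt fx (nth 0 l 0) (nth 1 l 0).
Proof. unfold c_Ucnt, Ucnt. rewrite den_SumC. dn. apply nsum_ext. intros. dn. reflexivity. Qed.
Lemma den_gc l : den c_gc l = gc fx (nth 0 l 0).
Proof. unfold c_gc, c_pr, gc, pr. dn. reflexivity. Qed.
End DenSpec.

Open Scope nat_scope.

Section Comp.
Variable cx : code.
Variable fx : nat -> nat -> nat.
Hypothesis Hcx : forall x y, eval cx [x; y] (fx x y).

Lemma gc_computable : computable1 (gc fx).
Proof.
  exists (subst cx c_gc). intros x.
  replace (gc fx x) with (denote fx c_gc [x]) by (rewrite den_gc; reflexivity).
  apply prb_eval; auto.
Qed.

Lemma mu_test Q (g : list nat -> nat) : prb Q = true ->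
  (forall y args, denote fx Q (y :: args) = g args) ->
  forall args, (exists y, eval (CMu (subst cx Q)) args y) <-> g args = 0.
Proof.
  intros HQ Hg args. split.
  - intros [y Hy]. inversion Hy; subst.
    pose proof (prb_eval cx fx Hcx Q HQ (y :: args)) as E.
    rewrite Hg in E. pose proof (eval_det _ _ _ H0 _ E). auto.
  - intros H0. exists 0. constructor.
    + pose proof (prb_eval cx fx Hcx Q HQ (0 :: args)) as E. rewrite Hg, H0 in E. auto.
    + intros; lia.
Qed.

Definition Qu := Iszc (CComp c_Ucnt [P 1; P 2]).
Definition Qv := Iszc (CComp c_Vcnt [P 1; P 2]).

Lemma U_ce : unif_ce (fun n s => 1 <= Ucnt fx n (code_str s)).
Proof.
  exists (CMu (subst cx Qu)). intros n s.
  rewrite (mu_test Qu (fun args => if Ucnt fx (nth 0 args 0) (nth 1 args 0) =? 0 then 1 else 0)).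
  - cbn [nth]. destruct (Ucnt fx n (code_str s) =? 0) eqn:E;
      [apply Nat.eqb_eq in E | apply Nat.eqb_neq in E]; split; intros; try lia; discriminate.
  - vm_compute; auto.
  - intros y args. unfold Qu. rewrite den_Isz, den_C. cbn [map]. rewrite den_Ucnt, !den_P. reflexivity.
Qed.

Lemma V_ce : unif_ce (fun n s => 1 <= Vcnt fx n (code_str s)).
Proof.
  exists (CMu (subst cx Qv)). intros n s.
  rewrite (mu_test Qv (fun args => if Vcnt fx (nth 0 args 0) (nth 1 args 0) =? 0 then 1 else 0)).
  - cbn [nth]. destruct (Vcnt fx n (code_str s) =? 0) eqn:E;
      [apply Nat.eqb_eq in E | apply Nat.eqb_neq in E]; split; intros; try lia; discriminate.
  - vm_compute; auto.
  - intros y args. unfold Qv. rewrite den_Isz, den_C. cbn [map]. rewrite den_Vcnt, !den_P. reflexivity.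
Qed.
End Comp.

Open Scope R_scope.

Notation lsum := sum_measure.

Lemma lsum_app g l1 l2 : lsum g (l1 ++ l2) = lsum g l1 + lsum g l2.
Proof. induction l1; simpl; [lra|]. rewrite IHl1; lra. Qed.
Lemma lsum_map g h (l : list (list bool)) : lsum g (map h l) = lsum (fun s => g (h s)) l.
Proof. induction l; simpl; auto. rewrite IHl; auto. Qed.
Lemma lsum_plus g h l : lsum (fun s => g s + h s) l = lsum g l + lsum h l.
Proof. induction l; simpl; [lra|]. rewrite IHl; lra. Qed.
Lemma lsum_scal a g l : lsum (fun s => a * g s) l = a * lsum g l.
Proof. induction l; simpl; [lra|]. rewrite IHl; lra. Qed.
Lemma lsum_ext g h l : (forall s, In s l -> g s = h s) -> lsum g l = lsum h l.
Proof. induction l; simpl; intros; auto. rewrite H, IHl; auto. Qed.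
Lemma lsum_le g h l : (forall s, In s l -> g s <= h s) -> lsum g l <= lsum h l.
Proof. induction l; simpl; intros; [lra|]. pose proof (H a (or_introl eq_refl)).
  assert (lsum g l <= lsum h l) by auto. lra. Qed.
Lemma lsum_nonneg g l : (forall s, In s l -> 0 <= g s) -> 0 <= lsum g l.
Proof. intros. replace 0 with (lsum (fun _ => 0) l). apply lsum_le; auto.
  induction l; simpl; auto. rewrite IHl; [lra|]. intros; apply H; simpl; auto. Qed.
Lemma lsum_filter g b l : lsum g (filter b l) = lsum (fun s => if b s then g s else 0) l.
Proof. induction l; simpl; auto. destruct (b a); simpl; rewrite IHl; lra. Qed.
Lemma lsum_const a (l : list (list bool)) : lsum (fun _ => a) l = INR (length l) * a.
Proof. induction l; cbn [length lsum sum_measure fold_right]; [simpl; lra|]. rewrite S_INR. unfold sum_measure in *. simpl. rewrite IHl. lra. Qed.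

Lemma lsum_incl g l1 l2 : (forall s, 0 <= g s) -> NoDup l1 -> incl l1 l2 -> lsum g l1 <= lsum g l2.
Proof.
  intros Hg Hnd. revert l2. induction Hnd as [|a l1 Ha Hnd IH]; intros l2 Hi.
  - simpl. apply lsum_nonneg; auto.
  - assert (In a l2) by (apply Hi; simpl; auto).
    apply in_split in H as [l2a [l2b ->]].
    rewrite lsum_app. simpl.
    assert (lsum g l1 <= lsum g (l2a ++ l2b)).
    { apply IH. intros x Hx. assert (In x (l2a ++ a :: l2b)) by (apply Hi; simpl; auto).
      apply in_app_or in H. apply in_or_app. destruct H as [H|[H|H]]; auto.
      subst; contradiction. }
    rewrite lsum_app in H. lra.
Qed.

Fixpoint rsum (n : nat) (g : nat -> R) : R :=
  match n with O => 0 | S n => rsum n g + g n end.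

Lemma rsum_ext n g h : (forall i, (i < n)%nat -> g i = h i) -> rsum n g = rsum n h.
Proof. induction n; simpl; intros; auto. rewrite IHn, H; auto. Qed.
Lemma rsum_le n g h : (forall i, (i < n)%nat -> g i <= h i) -> rsum n g <= rsum n h.
Proof. induction n; simpl; intros; [lra|]. assert (rsum n g <= rsum n h) by auto.
  pose proof (H n (Nat.lt_succ_diag_r n)). lra. Qed.
Lemma rsum_nonneg n g : (forall i, (i < n)%nat -> 0 <= g i) -> 0 <= rsum n g.
Proof. induction n; simpl; intros; [lra|]. assert (0 <= rsum n g) by auto.
  pose proof (H n (Nat.lt_succ_diag_r n)). lra. Qed.
Lemma rsum_lsum n (g : nat -> list bool -> R) l :
  rsum n (fun i => lsum (g i) l) = lsum (fun s => rsum n (fun i => g i s)) l.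
Proof. induction n; simpl. - induction l; simpl; auto. rewrite <- IHl. lra.
  - rewrite IHn, <- lsum_plus. auto. Qed.

Lemma cover (g : list bool -> R) (P : nat -> list bool -> bool) n l :
  (forall s, 0 <= g s) ->
  (forall s, In s l -> exists i, (i < n)%nat /\ P i s = true) ->
  lsum g l <= rsum n (fun i => lsum g (filter (P i) l)).
Proof.
  intros Hg. induction l as [|a l IH]; intros H; simpl.
  - apply Req_le. clear H. induction n; simpl; auto. rewrite <- IHn. lra.
  - assert (Hl : lsum g l <= rsum n (fun i => lsum g (filter (P i) l))) by (apply IH; intros; apply H; simpl; auto).
    destruct (H a (or_introl eq_refl)) as [i0 [Hi0 HP]].
    assert (E : rsum n (fun i => lsum g (if P i a then a :: filter (P i) l else filter (P i) l)) =
            rsum n (fun i => lsum g (filter (P i) l)) + rsum n (fun i => if P i a then g a else 0)).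
    { clear -n. induction n; simpl; [lra|]. rewrite IHn. destruct (P n a); simpl; lra. }
    rewrite E. assert (g a <= rsum n (fun i => if P i a then g a else 0)).
    { clear -Hi0 HP Hg. induction n; [lia|]. simpl. destruct (Nat.eq_dec i0 n).
      - subst. rewrite HP. assert (0 <= rsum n (fun i => if P i a then g a else 0)).
        { apply rsum_nonneg. intros. destruct (P i a); auto; lra. } lra.
      - assert (g a <= rsum n (fun i => if P i a then g a else 0)) by (apply IHn; lia).
        destruct (P n a); pose proof (Hg a); lra. }
    lra.
Qed.

Fixpoint strs (L : nat) : list (list bool) :=
  match L with
  | O => [[]]
  | S L => map (fun s => s ++ [false]) (strs L) ++ map (fun s => s ++ [true]) (strs L)
  end.

Lemma strs_len L s : In s (strs L) <-> length s = L.
Proof.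
  revert s; induction L; intros s; simpl.
  - split; [intros [<-|[]]; auto | destruct s; simpl; auto; discriminate].
  - rewrite in_app_iff, !in_map_iff. split.
    + intros [[x [<- Hx]]|[x [<- Hx]]]; apply IHL in Hx; rewrite length_app; simpl; lia.
    + intros Hl. destruct s as [|b s'] using rev_ind; [discriminate|].
      rewrite length_app in Hl; simpl in Hl.
      assert (length s' = L) by lia. apply IHL in H.
      destruct b; [right|left]; exists s'; auto.
Qed.

Lemma strs_nodup L : NoDup (strs L).
Proof.
  induction L; simpl. - constructor; auto. constructor.
  - apply NoDup_app.
    + apply NoDup_map_NoDup_ForallPairs; auto. intros x y _ _ H. apply app_inv_tail in H; auto.
    + apply NoDup_map_NoDup_ForallPairs; auto. intros x y _ _ H. apply app_inv_tail in H; auto.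
    + intros x Hx Hy. apply in_map_iff in Hx as [a [<- _]]. apply in_map_iff in Hy as [b [E _]].
      apply app_inj_tail in E as [_ E]. discriminate.
Qed.

Lemma strs_length L : length (strs L) = (2 ^ L)%nat.
Proof. induction L; simpl; auto. rewrite length_app, !length_map, IHL. lia. Qed.

Lemma xi_sum xi : is_prob_measure xi -> forall L, lsum xi (strs L) = 1.
Proof.
  intros [H0 [_ Hadd]] L. induction L; simpl. - rewrite H0; lra.
  - rewrite lsum_app, !lsum_map, <- lsum_plus. rewrite <- IHL.
    apply lsum_ext. intros s _. symmetry. apply Hadd.
Qed.

Fixpoint natl (g : list bool -> nat) (l : list (list bool)) : nat :=
  match l with [] => 0%nat | s :: l => (g s + natl g l)%nat end.

Lemma natl_INR g l : INR (natl g l) = lsum (fun s => INR (g s)) l.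
Proof. induction l; simpl; auto. rewrite plus_INR, IHl; auto. Qed.

Lemma natl_app g l1 l2 : natl g (l1 ++ l2) = (natl g l1 + natl g l2)%nat.
Proof. induction l1; simpl; auto. rewrite IHl1; lia. Qed.
Lemma natl_map g h l : natl g (map h l) = natl (fun s => g (h s)) l.
Proof. induction l; simpl; auto. Qed.
Lemma natl_ext g h l : (forall s, In s l -> g s = h s) -> natl g l = natl h l.
Proof. induction l; simpl; intros H; [auto|]. rewrite H, IHl; auto. Qed.

Lemma nsum_add n m f : nsum (n + m) f = (nsum n f + nsum m (fun i => f (n + i)%nat))%nat.
Proof. induction m; simpl. - rewrite Nat.add_0_r; lia. - rewrite Nat.add_succ_r. simpl. rewrite IHm. lia. Qed.

Lemma tv_app s b : tv (s ++ [b]) = (tv s + (if b then 2 ^ length s else 0))%nat.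
Proof. induction s as [|a s IH]; simpl. - destruct b; simpl; lia.
  - rewrite IH. destruct a, b; simpl; lia. Qed.

Lemma nsum_strs L G : nsum (2 ^ L) G = natl (fun s => G (tv s)) (strs L).
Proof.
  revert G; induction L; intros G; simpl. - auto.
  - replace (2 ^ L + (2 ^ L + 0))%nat with (2 ^ L + 2 ^ L)%nat by lia.
    rewrite nsum_add, natl_app, !natl_map, !IHL.
    f_equal; apply natl_ext; intros s Hs; apply strs_len in Hs; rewrite tv_app; subst.
    + f_equal. lia.
    + f_equal. lia.
Qed.

Open Scope R_scope.

Lemma count_app b s b' : count_bool b (s ++ [b']) = (count_bool b s + if Bool.eqb b' b then 1 else 0)%nat.
Proof. unfold count_bool. rewrite filter_app, length_app. simpl. destruct (Bool.eqb b' b); simpl; lia. Qed.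

Definition Zr (s : list bool) := INR (count_bool false s).

Lemma bern_f p s : bernoulli p (s ++ [false]) = p * bernoulli p s.
Proof. unfold bernoulli. rewrite !count_app. simpl. rewrite Nat.add_0_r, Nat.add_1_r. simpl. ring. Qed.
Lemma bern_t p s : bernoulli p (s ++ [true]) = (1 - p) * bernoulli p s.
Proof. unfold bernoulli. rewrite !count_app. simpl. rewrite Nat.add_0_r, Nat.add_1_r. simpl. ring. Qed.
Lemma Zr_f s : Zr (s ++ [false]) = Zr s + 1.
Proof. unfold Zr. rewrite count_app. simpl. rewrite plus_INR. simpl. lra. Qed.
Lemma Zr_t s : Zr (s ++ [true]) = Zr s.
Proof. unfold Zr. rewrite count_app. simpl. rewrite Nat.add_0_r. auto. Qed.

Lemma bern_step p L (g : R -> R) :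
  lsum (fun s => bernoulli p s * g (Zr s)) (strs (S L)) =
  lsum (fun s => bernoulli p s * (p * g (Zr s + 1) + (1 - p) * g (Zr s))) (strs L).
Proof.
  simpl. rewrite lsum_app, !lsum_map, <- lsum_plus. apply lsum_ext. intros s _.
  rewrite bern_f, bern_t, Zr_f, Zr_t. ring.
Qed.

Lemma bern_moments p L :
  lsum (fun s => bernoulli p s * 1) (strs L) = 1 /\
  lsum (fun s => bernoulli p s * Zr s) (strs L) = INR L * p /\
  lsum (fun s => bernoulli p s * (Zr s * Zr s)) (strs L) = INR L * p * (1 - p) + (INR L * p) * (INR L * p).
Proof.
  induction L as [|L [H0 [H1 H2]]].
  - simpl. unfold bernoulli, Zr. simpl. split; [|split]; lra.
  - rewrite (bern_step p L (fun _ => 1)), (bern_step p L (fun z => z)), (bern_step p L (fun z => z * z)).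
    rewrite S_INR.
    assert (E0 : lsum (fun s => bernoulli p s * (p * 1 + (1 - p) * 1)) (strs L) = 1).
    { transitivity (lsum (fun s => bernoulli p s * 1) (strs L)); [apply lsum_ext; intros; ring | exact H0]. }
    assert (E1 : lsum (fun s => bernoulli p s * (p * (Zr s + 1) + (1 - p) * Zr s)) (strs L) =
                 lsum (fun s => bernoulli p s * Zr s) (strs L) + p * lsum (fun s => bernoulli p s * 1) (strs L)).
    { rewrite <- lsum_scal, <- lsum_plus. apply lsum_ext; intros; ring. }
    assert (E2 : lsum (fun s => bernoulli p s * (p * ((Zr s + 1) * (Zr s + 1)) + (1 - p) * (Zr s * Zr s))) (strs L) =
                 lsum (fun s => bernoulli p s * (Zr s * Zr s)) (strs L) + 2 * p * lsum (fun s => bernoulli p s * Zr s) (strs L)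
                 + p * lsum (fun s => bernoulli p s * 1) (strs L)).
    { rewrite <- !lsum_scal, <- !lsum_plus. apply lsum_ext; intros; ring. }
    rewrite E0, E1, E2, H0, H1, H2. split; [|split]; ring.
Qed.

Lemma bern_var p L :
  lsum (fun s => bernoulli p s * ((Zr s - INR L * p) * (Zr s - INR L * p))) (strs L) = INR L * p * (1 - p).
Proof.
  destruct (bern_moments p L) as [H0 [H1 H2]].
  assert (E : lsum (fun s => bernoulli p s * ((Zr s - INR L * p) * (Zr s - INR L * p))) (strs L) =
     lsum (fun s => bernoulli p s * (Zr s * Zr s)) (strs L) - 2 * (INR L * p) * lsum (fun s => bernoulli p s * Zr s) (strs L)
     + (INR L * p) * (INR L * p) * lsum (fun s => bernoulli p s * 1) (strs L)).
  { set (a := INR L * p).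
    transitivity (lsum (fun s => (bernoulli p s * (Zr s * Zr s) + (- 2 * a) * (bernoulli p s * Zr s))
                  + (a * a) * (bernoulli p s * 1)) (strs L)).
    { apply lsum_ext; intros; ring. }
    rewrite !lsum_plus, !lsum_scal. ring. }
  rewrite E, H0, H1, H2. ring.
Qed.

Lemma bern_nonneg p s : 0 <= p <= 1 -> 0 <= bernoulli p s.
Proof. intros. unfold bernoulli. apply Rmult_le_pos; apply pow_le; lra. Qed.

Lemma chebyshev p L d (bad : list bool -> bool) : 0 <= p <= 1 -> 0 < d ->
  (forall s, In s (strs L) -> bad s = true -> d * d <= (Zr s - INR L * p) * (Zr s - INR L * p)) ->
  lsum (bernoulli p) (filter bad (strs L)) <= INR L / 4 / (d * d).
Proof.
  intros Hp Hd Hbad. rewrite lsum_filter.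
  assert (Hdd : 0 < d * d) by nra.
  apply Rle_trans with (lsum (fun s => / (d * d) * (bernoulli p s * ((Zr s - INR L * p) * (Zr s - INR L * p)))) (strs L)).
  - apply lsum_le. intros s Hs. pose proof (bern_nonneg p s Hp).
    destruct (bad s) eqn:E.
    + specialize (Hbad s Hs E).
      apply Rmult_le_reg_l with (d * d); auto. rewrite <- Rmult_assoc, Rinv_r by lra. rewrite Rmult_1_l, Rmult_comm. apply Rmult_le_compat_l; auto.
    + apply Rmult_le_pos. left; apply Rinv_0_lt_compat; auto.
      apply Rmult_le_pos; [auto | apply Rle_0_sqr].
  - rewrite lsum_scal, bern_var. unfold Rdiv. rewrite Rmult_comm.
    apply Rmult_le_compat_r. left; apply Rinv_0_lt_compat; auto.
    pose proof (pos_INR L). assert (p * (1 - p) <= / 4) by (assert (0 <= (p - /2) * (p - /2)) by apply Rle_0_sqr; lra). unfold Rdiv. rewrite Rmult_assoc. apply Rmult_le_compat_l; auto.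
Qed.

Open Scope R_scope.

Lemma findf_spec n g : (findf n g = n /\ forall i, (i < n)%nat -> g i = 0%nat) \/
                        ((findf n g < n)%nat /\ g (findf n g) <> 0%nat).
Proof.
  induction n; simpl. - left; split; auto; intros; lia.
  - destruct IHn as [[E H]|[E H]].
    + rewrite E, Nat.eqb_refl. destruct (g n =? 0)%nat eqn:G.
      * apply Nat.eqb_eq in G. left. split; [lia|]. intros i Hi. destruct (Nat.eq_dec i n); subst; auto. apply H; lia.
      * apply Nat.eqb_neq in G. right. rewrite Nat.add_0_r. split; auto.
    + assert (findf n g =? n = false)%nat by (apply Nat.eqb_neq; lia). rewrite H0.
      right. rewrite Nat.add_0_r. split; auto.
Qed.

Lemma findf_found n g j : (j < n)%nat -> g j <> 0%nat -> (findf n g < n)%nat /\ g (findf n g) <> 0%nat.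
Proof. intros. destruct (findf_spec n g) as [[_ H1]|H1]; auto. rewrite H1 in H0; auto; lia. Qed.

Lemma even_half a : (2 * (a / 2) =? a)%nat = Nat.even a.
Proof.
  destruct (Nat.even a) eqn:E.
  - apply Nat.eqb_eq. apply Nat.even_spec in E. destruct E as [k ->].
    rewrite (Nat.mul_comm 2 k), Nat.div_mul by lia. lia.
  - apply Nat.eqb_neq. intros H. rewrite <- H, Nat.even_even in E. discriminate.
Qed.

Lemma div_bounds x y : (0 < y)%nat -> INR y * INR (x / y) <= INR x < INR y * INR (x / y) + INR y.
Proof.
  intros Hy. pose proof (Nat.div_mod_eq x y). pose proof (Nat.mod_upper_bound x y ltac:(lia)).
  rewrite <- mult_INR. split.
  - apply le_INR. lia.
  - rewrite <- plus_INR. apply lt_INR. lia.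
Qed.

Lemma Rabs_le_inv a b : Rabs a <= b -> - b <= a <= b.
Proof. unfold Rabs. destruct (Rcase_abs a); intros; lra. Qed.

Section Main.
Variable xi : list bool -> R.
Variable f : nat -> nat -> nat.
Hypothesis Hxi : is_prob_measure xi.
Hypothesis Hf : forall s n, Rabs (rat_of_nat (f (code_str s) n) - xi s) <= / 2 ^ n.

Lemma xi_nonneg s : 0 <= xi s.
Proof. destruct Hxi as [_ [H _]]; auto. Qed.

Lemma N_bound s p : Rabs (INR (Nv f (code_str s) p) - 2 ^ p * xi s) <= 2.
Proof.
  pose proof (Hf s p) as H. unfold rat_of_nat in H. unfold Nv.
  pose proof (UAB_spec (f (code_str s) p)) as E. rewrite E in H.
  set (a := UA (f (code_str s) p)) in *. set (b := UB (f (code_str s) p)) in *.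
  pose proof (xi_nonneg s) as Hx.
  assert (Hp : 0 < 2 ^ p) by (apply pow_lt; lra).
  rewrite even_half. unfold int_of_nat in H. destruct (Nat.even a).
  - pose proof (div_bounds (a / 2 * 2 ^ p) (S b) ltac:(lia)) as [D1 D2].
    rewrite mult_INR, pow_INR in D1, D2. replace (INR 2) with 2 in D1, D2 by (simpl; lra).
    set (N := INR (a / 2 * 2 ^ p / S b)) in *. set (q := INR (a / 2)) in *.
    assert (Hb : 0 < INR (S b)) by (apply lt_0_INR; lia).
    apply Rabs_le_inv in H as [H1 H2]. apply Rabs_le.
    assert (E2 : 2 ^ p * (q / INR (S b)) = q * 2 ^ p / INR (S b)) by (field; lra).
    assert (Hinv : 2 ^ p * / 2 ^ p = 1) by (field; lra).
    assert (N <= q * 2 ^ p / INR (S b)).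
    { apply Rmult_le_reg_l with (INR (S b)); auto.
      replace (INR (S b) * (q * 2 ^ p / INR (S b))) with (q * 2^p) by (field; lra). lra. }
    assert (q * 2 ^ p / INR (S b) < N + 1).
    { apply Rmult_lt_reg_l with (INR (S b)); auto.
      replace (INR (S b) * (q * 2 ^ p / INR (S b))) with (q * 2^p) by (field; lra). lra. }
    assert (2 ^ p * (q / INR (S b) - xi s) <= 1) by (apply Rmult_le_compat_l with (r := 2^p) in H2; lra).
    assert (-1 <= 2 ^ p * (q / INR (S b) - xi s)) by (apply Rmult_le_compat_l with (r := 2^p) in H1; lra).
    split; nra.
  - apply Rabs_le_inv in H as [H1 H2]. simpl INR. apply Rabs_le.
    assert (0 <= INR ((a + 1) / 2) / INR (S b)).
    { apply Rmult_le_pos; [apply pos_INR | left; apply Rinv_0_lt_compat, lt_0_INR; lia]. }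
    assert (xi s <= / 2 ^ p) by (unfold Rdiv in *; lra).
    assert (2 ^ p * xi s <= 1).
    { assert (2 ^ p * / 2 ^ p = 1) by (field; lra). apply Rmult_le_compat_l with (r := 2^p) in H0; lra. }
    split; nra.
Qed.
End Main.

Open Scope R_scope.

Lemma lsum_minus g h (l : list (list bool)) : lsum (fun s => g s - h s) l = lsum g l - lsum h l.
Proof. induction l; simpl; [lra|]. rewrite IHl; lra. Qed.

Lemma core01 m A j Z : core m A j Z = 0%nat \/ core m A j Z = 1%nat.
Proof. unfold core. destruct (_ <=? _)%nat; destruct (_ <? _)%nat; auto. Qed.

Lemma core_pos m A j Z : core m A j Z <> 0%nat <->
  (Lm m * (Bm m A + j) <= Z * 2 ^ Fm m /\ Z * 2 ^ Fm m < Lm m * (Bm m A + j + 1))%nat.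
Proof.
  unfold core. destruct (_ <=? _)%nat eqn:E1; destruct (_ <? _)%nat eqn:E2;
  [apply Nat.leb_le in E1; apply Nat.ltb_lt in E2 | apply Nat.leb_le in E1; apply Nat.ltb_ge in E2
  | apply Nat.leb_gt in E1; apply Nat.ltb_lt in E2 | apply Nat.leb_gt in E1; apply Nat.ltb_ge in E2];
  simpl; split; intros; try lia.
Qed.

Lemma core_unique m A j1 j2 Z : core m A j1 Z <> 0%nat -> core m A j2 Z <> 0%nat -> j1 = j2.
Proof.
  rewrite !core_pos. intros [H1 H2] [H3 H4].
  destruct (Nat.lt_trichotomy j1 j2) as [h|[h|h]]; auto.
  - assert (Lm m * (Bm m A + j1 + 1) <= Lm m * (Bm m A + j2))%nat by (apply Nat.mul_le_mono_l; lia). lia.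
  - assert (Lm m * (Bm m A + j2 + 1) <= Lm m * (Bm m A + j1))%nat by (apply Nat.mul_le_mono_l; lia). lia.
Qed.

Lemma rsum_uniq K (sel : nat -> bool) x : 0 <= x ->
  (forall j1 j2, sel j1 = true -> sel j2 = true -> j1 = j2) ->
  rsum K (fun j => if sel j then x else 0) <= x.
Proof.
  intros Hx Hu. induction K; simpl; [lra|].
  destruct (sel K) eqn:E.
  - assert (rsum K (fun j => if sel j then x else 0) = 0).
    { clear IHK. transitivity (rsum K (fun _ => 0)).
      - apply rsum_ext. intros i Hi. destruct (sel i) eqn:F; auto.
        pose proof (Hu i K F E). lia.
      - clear. induction K; simpl; auto. rewrite IHK; lra. }
    lra.
  - lra.
Qed.

Lemma rsum_gt K g c : (0 < K)%nat -> (forall j, (j < K)%nat -> c < g j) -> INR K * c < rsum K g.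
Proof.
  intros HK H. induction K; [lia|]. simpl rsum. rewrite S_INR.
  destruct (Nat.eq_dec K 0).
  - subst. simpl. pose proof (H 0%nat ltac:(lia)). lra.
  - assert (INR K * c < rsum K g) by (apply IHK; [lia| intros; apply H; lia]).
    pose proof (H K ltac:(lia)). lra.
Qed.

Section Stage.
Variable xi : list bool -> R.
Variable f : nat -> nat -> nat.
Hypothesis Hxi : is_prob_measure xi.
Hypothesis Hf : forall s n, Rabs (rat_of_nat (f (code_str s) n) - xi s) <= / 2 ^ n.

Definition selj m A j (s : list bool) : bool := negb (core m A j (count_bool false s) =? 0)%nat.
Definition TM m A j := lsum xi (filter (selj m A j) (strs (Lm m))).

Lemma INR_core m A j s : INR (core m A j (count_bool false s)) = if selj m A j s then 1 else 0.
Proof. unfold selj. destruct (core01 m A j (count_bool false s)) as [E|E]; rewrite E; simpl; auto. Qed.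

Lemma mass_INR m A j : INR (mass f m A j) =
  lsum (fun s => INR (core m A j (count_bool false s)) * INR (Nv f (code_str s) (pm m))) (strs (Lm m)).
Proof.
  unfold mass. rewrite nsum_strs, natl_INR. apply lsum_ext. intros s Hs.
  apply strs_len in Hs. rewrite mult_INR. f_equal; f_equal; f_equal.
  - rewrite <- Hs, pop_tv. pose proof (count_ft s). lia.
  - pose proof (code_str_tv s). rewrite <- Hs. lia.
Qed.

Lemma mass_close m A j : Rabs (INR (mass f m A j) - 2 ^ pm m * TM m A j) <= 2 * 2 ^ Lm m.
Proof.
  rewrite mass_INR. unfold TM. rewrite lsum_filter, <- lsum_scal, <- lsum_minus.
  assert (E : INR (length (strs (Lm m))) = 2 ^ Lm m) by (rewrite strs_length, pow_INR; simpl; f_equal; lra).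
  apply Rabs_le. split.
  - replace (- (2 * 2 ^ Lm m)) with (lsum (fun _ => -2) (strs (Lm m))) by (rewrite lsum_const, E; lra).
    apply lsum_le. intros s _. rewrite INR_core.
    pose proof (Rabs_le_inv _ _ (N_bound xi f Hxi Hf s (pm m))).
    destruct (selj m A j s); lra.
  - replace (2 * 2 ^ Lm m) with (lsum (fun _ => 2) (strs (Lm m))) by (rewrite lsum_const, E; lra).
    apply lsum_le. intros s _. rewrite INR_core.
    pose proof (Rabs_le_inv _ _ (N_bound xi f Hxi Hf s (pm m))).
    destruct (selj m A j s); lra.
Qed.

Lemma TM_sum m A : rsum (Km m) (TM m A) <= 1.
Proof.
  unfold TM. rewrite (rsum_ext _ _ (fun j => lsum (fun s => if selj m A j s then xi s else 0) (strs (Lm m))))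
    by (intros; apply lsum_filter).
  rewrite rsum_lsum. rewrite <- (xi_sum xi Hxi (Lm m)). apply lsum_le. intros s _.
  apply rsum_uniq. apply (xi_nonneg xi Hxi).
  intros j1 j2 H1 H2. unfold selj in *. apply negb_true_iff, Nat.eqb_neq in H1, H2.
  eapply core_unique; eauto.
Qed.

Lemma exists_small m A : exists j0, (j0 < Km m)%nat /\ TM m A j0 <= / INR (Km m).
Proof.
  assert (HK : (0 < Km m)%nat) by (unfold Km; apply Nat.neq_0_lt_0, Nat.pow_nonzero; lia).
  assert (HKr : 0 < INR (Km m)) by (apply lt_0_INR; auto).
  destruct (Classical_Prop.classic (exists j0, (j0 < Km m)%nat /\ TM m A j0 <= / INR (Km m))) as [H|H]; auto.
  exfalso. assert (forall j, (j < Km m)%nat -> / INR (Km m) < TM m A j).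
  { intros j Hj. apply Rnot_le_lt. intros C. apply H. eauto. }
  pose proof (rsum_gt _ _ _ HK H0). pose proof (TM_sum m A).
  rewrite Rinv_r in H1 by lra. lra.
Qed.

Lemma stage_good m A : (jsel f m A < Km m)%nat /\ TM m A (jsel f m A) <= / 2 ^ S m.
Proof.
  set (L := Lm m). set (X := 2 ^ L). set (Y := 2 ^ (2 * m + 4)).
  assert (HX : 0 < X) by (apply pow_lt; lra). assert (HY : 0 < Y) by (apply pow_lt; lra).
  assert (Ep : 2 ^ pm m = X * Y * 4).
  { unfold pm, X, Y. fold L. replace (L + 2 * m + 6)%nat with (L + (2 * m + 4) + 2)%nat by lia.
    rewrite !pow_add. simpl. lra. }
  assert (EK : INR (Km m) = Y) by (unfold Km, Y; rewrite pow_INR; simpl; f_equal; lra).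
  destruct (exists_small m A) as [j0 [Hj0 HT0]]. rewrite EK in HT0.
  pose proof (Rabs_le_inv _ _ (mass_close m A j0)) as [C1 C2]. fold L X in C1, C2. rewrite Ep in C1, C2.
  assert (HTn : 0 <= TM m A j0) by (apply lsum_nonneg; intros; apply (xi_nonneg xi Hxi)).
  assert (HM : INR (mass f m A j0) <= INR (3 * 2 ^ S L)).
  { rewrite mult_INR, pow_INR. replace (INR 3) with 3 by (simpl; lra). replace (INR 2) with 2 by (simpl; lra).
    replace (2^S L) with (2 * X) by (simpl; fold X; lra).
    assert (X * Y * 4 * TM m A j0 <= X * Y * 4 * / Y) by (apply Rmult_le_compat_l; [nra|lra]).
    replace (X * Y * 4 * / Y) with (4 * X) in H by (field; lra). lra. }
  apply INR_le in HM.
  destruct (findf_found (Km m) (fun j => if mass f m A j <=? 3 * 2 ^ S (Lm m) then 1 else 0)%nat j0 Hj0)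
    as [Hlt Hg]. { fold L. rewrite (proj2 (Nat.leb_le _ _) HM). lia. }
  fold (jsel f m A) in Hlt, Hg. split; auto.
  set (j := jsel f m A) in *.
  assert (HMj : (mass f m A j <= 3 * 2 ^ S L)%nat).
  { destruct (mass f m A j <=? 3 * 2 ^ S (Lm m))%nat eqn:E; [apply Nat.leb_le; auto | lia]. }
  apply le_INR in HMj. rewrite mult_INR, pow_INR in HMj.
  replace (INR 3) with 3 in HMj by (simpl; lra). replace (INR 2) with 2 in HMj by (simpl; lra).
  replace (2^S L) with (2 * X) in HMj by (simpl; fold X; lra).
  pose proof (Rabs_le_inv _ _ (mass_close m A j)) as [D1 D2]. fold L X in D1, D2. rewrite Ep in D1, D2.
  assert (HT : TM m A j <= 2 / Y).
  { apply Rmult_le_reg_l with (X * Y * 4). nra.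
    replace (X * Y * 4 * (2 / Y)) with (8 * X) by (field; lra). lra. }
  assert (HP : 2 * 2 ^ S m <= Y).
  { unfold Y. replace (2 * 2 ^ S m) with (2 ^ (S (S m))) by (simpl; lra).
    apply Rle_pow; [lra|lia]. }
  assert (0 < 2 ^ S m) by (apply pow_lt; lra).
  apply Rle_trans with (2 / Y); auto.
  apply Rmult_le_reg_l with (Y * 2 ^ S m). nra.
  replace (Y * 2 ^ S m * (2 / Y)) with (2 * 2 ^ S m) by (field; lra).
  replace (Y * 2 ^ S m * / 2 ^ S m) with Y by (field; lra). lra.
Qed.
End Stage.

Open Scope R_scope.

Lemma Em_S m : Em (S m) = (Fm m + 2)%nat.
Proof. unfold Em, Fm. replace ((S m + 2) * (S m + 2))%nat with ((m + 2) * (m + 2) + 2 * m + 5)%nat by ring.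
  assert (4 <= (m + 2) * (m + 2))%nat by (apply (Nat.mul_le_mono 2 (m+2) 2 (m+2)); lia). unfold Em. lia. Qed.

Lemma Em_ge m : (S m <= Em m)%nat.
Proof. unfold Em. assert (m + 4 <= (m + 2) * (m + 2))%nat by (replace ((m+2)*(m+2))%nat with (m*m + 4*m + 4)%nat by ring; lia). lia. Qed.

Section Interval.
Variable f : nat -> nat -> nat.

Definition am m := INR (Ast f m) / 2 ^ Em m.
Definition um m := / 2 ^ Em m.

Lemma Ast_S m : Ast f (S m) = (4 * (Bm m (Ast f m) + jsel f m (Ast f m)) + 1)%nat.
Proof. reflexivity. Qed.

Hypothesis Hj : forall m, (jsel f m (Ast f m) < Km m)%nat.

Lemma am_step m : am m <= am (S m) /\ am (S m) + 2 * um (S m) <= am m + 2 * um m.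
Proof.
  unfold am, um. rewrite Ast_S, Em_S.
  set (A := Ast f m). set (j := jsel f m A). specialize (Hj m). fold A j in Hj.
  assert (EF : (Fm m + 2 = Em m + (2 * m + 5))%nat) by (unfold Fm; lia).
  rewrite EF, pow_add. set (P := 2 ^ Em m). set (Q := 2 ^ (2 * m + 5)).
  assert (HP : 0 < P) by (apply pow_lt; lra). assert (HQ : 0 < Q) by (apply pow_lt; lra).
  assert (EB : INR (4 * Bm m A) = INR A * Q).
  { unfold Bm, Q. rewrite mult_INR, mult_INR, pow_INR. replace (INR 4) with 4 by (simpl; lra).
    replace (INR 2) with 2 by (simpl; lra). replace (2 * m + 5)%nat with (2 * m + 3 + 2)%nat by lia.
    rewrite !pow_add. replace (2^3) with 8 by (simpl;lra). replace (2^2) with 4 by (simpl; lra). ring. }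
  assert (EK : INR (4 * j + 3) <= 2 * Q).
  { unfold Q. replace (2 * m + 5)%nat with (S (2 * m + 4)) by lia.
    assert (INR (4 * j + 3) <= INR (4 * Km m)) by (apply le_INR; lia).
    unfold Km in H. rewrite mult_INR, pow_INR in H. replace (INR 2) with 2 in H by (simpl; lra).
    replace (INR 4) with 4 in H by (simpl; lra). replace (2 ^ S (2*m+4)) with (2 * 2^(2*m+4)) by (simpl; lra). lra. }
  rewrite !mult_INR, !plus_INR, mult_INR in *. replace (INR 4) with 4 in * by (simpl; lra).
  replace (INR 1) with 1 by (simpl; lra).
  replace (INR 3) with 3 in EK by (simpl; lra). rewrite ?plus_INR, ?mult_INR. replace (INR 4) with 4 by (simpl; lra).
  split.
  - apply Rmult_le_reg_l with (P * Q). nra.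
    replace (P * Q * (INR A / P)) with (INR A * Q) by (field; lra).
    replace (P * Q * ((4 * (INR (Bm m A) + INR j) + 1) / (P * Q))) with (4 * (INR (Bm m A) + INR j) + 1) by (field; lra).
    pose proof (pos_INR j). lra.
  - apply Rmult_le_reg_l with (P * Q). nra.
    replace (P * Q * ((4 * (INR (Bm m A) + INR j) + 1) / (P * Q) + 2 * / (P * Q)))
      with (4 * (INR (Bm m A) + INR j) + 3) by (field; lra).
    replace (P * Q * (INR A / P + 2 * / P)) with (INR A * Q + 2 * Q) by (field; lra).
    lra.
Qed.

Lemma am_mono m k : am m <= am (m + k) /\ am (m + k) + 2 * um (m + k) <= am m + 2 * um m.
Proof.
  induction k. - rewrite Nat.add_0_r; lra.
  - rewrite Nat.add_succ_r. pose proof (am_step (m + k)). lra.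
Qed.

Lemma um_pos m : 0 < um m.
Proof. unfold um. apply Rinv_0_lt_compat, pow_lt; lra. Qed.

Lemma am_bound m m' : am m' <= am m + 2 * um m.
Proof.
  destruct (Nat.le_gt_cases m m').
  - replace m' with (m + (m' - m))%nat by lia. pose proof (am_mono m (m' - m)).
    pose proof (um_pos (m + (m' - m))). lra.
  - replace m with (m' + (m - m'))%nat by lia. pose proof (am_mono m' (m - m')).
    pose proof (um_pos (m' + (m - m'))). lra.
Qed.

Definition cE := fun x => exists m, x = am m.

Lemma cE_bound : bound cE.
Proof. exists (am 0 + 2 * um 0). intros x [m ->]. apply am_bound. Qed.

Lemma cE_ex : exists x, cE x.
Proof. exists (am 0). exists 0%nat. auto. Qed.

Definition cval : R := proj1_sig (completeness cE cE_bound cE_ex).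

Lemma cval_in m : am m <= cval <= am m + 2 * um m.
Proof.
  unfold cval. destruct (completeness cE cE_bound cE_ex) as [c [H1 H2]]. simpl.
  split. - apply H1. exists m; auto.
  - apply H2. intros x [m' ->]. apply am_bound.
Qed.

Lemma cval_01 : 0 <= cval <= 1.
Proof.
  pose proof (cval_in 0). unfold am, um in H. simpl in H. unfold Em in H. simpl in H.
  unfold Ast in H. simpl in H. lra.
Qed.

Lemma rat_gc n : rat_of_nat (gc f n) = am n.
Proof.
  unfold rat_of_nat, gc. rewrite unpair_pr. unfold int_of_nat.
  rewrite Nat.even_even. rewrite (Nat.mul_comm 2), Nat.div_mul by lia.
  unfold am. f_equal. pose proof (Nat.pow_nonzero 2 (Em n) ltac:(lia)).
  replace (S (2 ^ Em n - 1)) with (2 ^ Em n)%nat by lia. rewrite pow_INR. simpl. f_equal.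
Qed.

Lemma cval_approx n : Rabs (rat_of_nat (gc f n) - cval) <= / 2 ^ n.
Proof.
  rewrite rat_gc. pose proof (cval_in n). apply Rabs_le.
  assert (2 * um n <= / 2 ^ n).
  { unfold um. pose proof (Em_ge n).
    assert (2 ^ S n <= 2 ^ Em n) by (apply Rle_pow; [lra|lia]).
    assert (0 < 2 ^ n) by (apply pow_lt; lra). simpl in H1.
    apply Rmult_le_reg_l with (2 ^ Em n). apply pow_lt; lra.
    replace (2 ^ Em n * (2 * / 2 ^ Em n)) with 2 by (field; apply pow_nonzero; lra).
    apply Rmult_le_reg_l with (2 ^ n); auto.
    replace (2 ^ n * (2 ^ Em n * / 2 ^ n)) with (2 ^ Em n) by (field; lra). lra. }
  lra.
Qed.
End Interval.

Open Scope R_scope.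

Lemma nsum_pos_iff n g : (1 <= nsum n g)%nat <-> exists i, (i < n)%nat /\ g i <> 0%nat.
Proof.
  induction n; cbn [nsum]. - split; [lia | intros [i [Hi _]]; lia].
  - split.
    + intros H. destruct (g n) eqn:E.
      * rewrite Nat.add_0_r in H. apply IHn in H as [i [Hi Hg]]. exists i; split; auto; lia.
      * exists n; split; [lia | rewrite E; discriminate].
    + intros [i [Hi Hg]]. destruct (Nat.eq_dec i n). subst; lia.
      assert (1 <= nsum n g)%nat by (apply IHn; exists i; split; auto; lia). lia.
Qed.

Lemma len_le_code s : (length s <= code_str s)%nat.
Proof. pose proof (code_str_tv s). pose proof (Nat.pow_gt_lin_r 2 (length s) ltac:(lia)). lia. Qed.

Lemma m_lt_Lm m : (m < Lm m)%nat.
Proof. unfold Lm. pose proof (Nat.pow_gt_lin_r 2 (m + 2 * (Fm m + 2)) ltac:(lia)). lia. Qed.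

Section Final.
Variable f : nat -> nat -> nat.
Hypothesis Hj : forall m, (jsel f m (Ast f m) < Km m)%nat.

Definition coreS m s := core m (Ast f m) (jsel f m (Ast f m)) (count_bool false s).
Definition selU m s := ((Lm m =? length s) && (coreS m s =? 0))%nat.
Definition selV m s := ((Lm m =? length s) && negb (coreS m s =? 0))%nat.

Lemma coreX_code m s : coreX f m (code_str s) = coreS m s.
Proof. unfold coreX, coreS. rewrite Zx_code. auto. Qed.

Lemma Ucnt_iff n s : (1 <= Ucnt f n (code_str s))%nat <-> exists m, (n < m)%nat /\ selU m s = true.
Proof.
  unfold Ucnt. rewrite nsum_pos_iff. rewrite ell_code. split.
  - intros [m [_ H]]. exists m. rewrite coreX_code in H.
    destruct (n <? m)%nat eqn:E1; [|simpl in H; lia]. destruct (Lm m =? length s)%nat eqn:E2; [|simpl in H; lia].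
    apply Nat.ltb_lt in E1. split; auto. unfold selU. rewrite E2. simpl.
    destruct (core01 m (Ast f m) (jsel f m (Ast f m)) (count_bool false s)) as [E|E]; unfold coreS in *; rewrite E in *; auto.
    all: simpl in H; lia.
  - intros [m [H1 H2]]. unfold selU in H2. apply andb_true_iff in H2 as [H2 H3].
    apply Nat.eqb_eq in H2. apply Nat.eqb_eq in H3. exists m. split.
    + pose proof (m_lt_Lm m). pose proof (len_le_code s). lia.
    + rewrite coreX_code, H3. rewrite (proj2 (Nat.ltb_lt _ _) H1), H2, Nat.eqb_refl. simpl. lia.
Qed.

Lemma Vcnt_iff n s : (1 <= Vcnt f n (code_str s))%nat <-> exists m, (n < m)%nat /\ selV m s = true.
Proof.
  unfold Vcnt. rewrite nsum_pos_iff. rewrite ell_code. split.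
  - intros [m [_ H]]. exists m. rewrite coreX_code in H.
    destruct (n <? m)%nat eqn:E1; [|simpl in H; lia]. destruct (Lm m =? length s)%nat eqn:E2; [|simpl in H; lia].
    apply Nat.ltb_lt in E1. split; auto. unfold selV. rewrite E2. simpl.
    destruct (core01 m (Ast f m) (jsel f m (Ast f m)) (count_bool false s)) as [E|E]; unfold coreS in *; rewrite E in *; auto.
    all: simpl in H; lia.
  - intros [m [H1 H2]]. unfold selV in H2. apply andb_true_iff in H2 as [H2 H3].
    apply Nat.eqb_eq in H2. apply negb_true_iff, Nat.eqb_neq in H3. exists m. split.
    + pose proof (m_lt_Lm m). pose proof (len_le_code s). lia.
    + rewrite coreX_code. rewrite (proj2 (Nat.ltb_lt _ _) H1), H2, Nat.eqb_refl.
      destruct (core01 m (Ast f m) (jsel f m (Ast f m)) (count_bool false s)) as [E|E]; unfold coreS in *; rewrite E in *; simpl; lia.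
Qed.

Lemma geo n M : rsum M (fun i => if (n <? i)%nat then / 2 ^ S i else 0) <= / 2 ^ n - / 2 ^ Nat.max M n.
Proof.
  induction M; cbn [rsum].
  - rewrite Nat.max_r by lia. lra.
  - destruct (n <? M)%nat eqn:E.
    + apply Nat.ltb_lt in E. rewrite Nat.max_l in IHM by lia. rewrite Nat.max_l by lia.
      assert (0 < 2 ^ M) by (apply pow_lt; lra).
      assert (/ 2 ^ S M = / 2 ^ M / 2) by (simpl; field; lra). lra.
    + apply Nat.ltb_ge in E.
      assert (/ 2 ^ Nat.max (S M) n <= / 2 ^ Nat.max M n).
      { apply Rinv_le_contravar. apply pow_lt; lra. apply Rle_pow; [lra|lia]. }
      lra.
Qed.

Lemma union_bound (mu : list bool -> R) (sel : nat -> list bool -> bool) n Ls :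
  (forall s, 0 <= mu s) ->
  (forall m s, sel m s = true -> length s = Lm m) ->
  (forall m, lsum mu (filter (sel m) (strs (Lm m))) <= / 2 ^ S m) ->
  NoDup Ls -> (forall s, In s Ls -> exists m, (n < m)%nat /\ sel m s = true) ->
  lsum mu Ls <= / 2 ^ n.
Proof.
  intros Hmu Hlen Hm Hnd Hin.
  set (M := S (fold_right (fun s acc => length s + acc)%nat 0%nat Ls)).
  assert (HM : forall s, In s Ls -> (length s < M)%nat).
  { intros s Hs. unfold M. clear -Hs. induction Ls; simpl in *; [contradiction|]. destruct Hs as [<-|Hs]; [lia|].
    specialize (IHLs Hs). lia. }
  apply Rle_trans with (rsum M (fun i => lsum mu (filter (fun s => (n <? i)%nat && sel i s) Ls))).
  - apply cover; auto. intros s Hs. destruct (Hin s Hs) as [m [H1 H2]]. exists m. split.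
    + pose proof (Hlen _ _ H2). pose proof (m_lt_Lm m). pose proof (HM s Hs). lia.
    + rewrite (proj2 (Nat.ltb_lt _ _) H1). auto.
  - apply Rle_trans with (rsum M (fun i => if (n <? i)%nat then / 2 ^ S i else 0)).
    + apply rsum_le. intros i Hi. destruct (n <? i)%nat eqn:E; simpl.
      * apply Rle_trans with (lsum mu (filter (sel i) (strs (Lm i)))); auto.
        apply lsum_incl; auto. apply NoDup_filter; auto.
        intros s Hs. apply filter_In in Hs as [Hs1 Hs2]. apply filter_In. split; auto.
        apply strs_len. auto.
      * clear. induction Ls; simpl; [lra|]. auto.
    + pose proof (geo n M). assert (0 < / 2 ^ Nat.max M n) by (apply Rinv_0_lt_compat, pow_lt; lra). lra.
Qed.
End Final.

Open Scope R_scope.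

Section U.
Variable f : nat -> nat -> nat.
Hypothesis Hj : forall m, (jsel f m (Ast f m) < Km m)%nat.

Lemma U_dist m s : length s = Lm m -> coreS f m s = 0%nat ->
  (INR (Lm m) * um (S m)) * (INR (Lm m) * um (S m)) <=
  (Zr s - INR (Lm m) * cval f Hj) * (Zr s - INR (Lm m) * cval f Hj).
Proof.
  intros Hl Hc. pose proof (cval_in f Hj (S m)) as [C1 C2].
  unfold coreS in Hc. set (A := Ast f m) in *. set (j := jsel f m A) in *.
  assert (Hn : ~ (Lm m * (Bm m A + j) <= count_bool false s * 2 ^ Fm m /\
                 count_bool false s * 2 ^ Fm m < Lm m * (Bm m A + j + 1))%nat).
  { intros H. apply core_pos in H. auto. }
  unfold am, um in *. rewrite Ast_S, Em_S in *. fold A j in C1, C2.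
  set (G := 2 ^ Fm m). assert (HG : 0 < G) by (apply pow_lt; lra).
  assert (E4 : 2 ^ (Fm m + 2) = 4 * G) by (unfold G; rewrite pow_add; simpl; lra).
  rewrite E4 in *.
  set (L := Lm m) in *. set (Z := count_bool false s) in *.
  assert (HL : 0 < INR L) by (apply lt_0_INR; unfold L; pose proof (m_lt_Lm m); lia).
  unfold Zr. fold Z.
  set (c := cval f Hj) in *.
  assert (HZG : INR (Z * 2 ^ Fm m) = INR Z * G) by (rewrite mult_INR, pow_INR; unfold G; simpl; f_equal; f_equal; lra).
  assert (HB : forall k, INR (L * (Bm m A + j + k)) = INR L * (INR (Bm m A) + INR j + INR k)).
  { intros. rewrite mult_INR, !plus_INR. auto. }
  rewrite !plus_INR, mult_INR in C1, C2. replace (INR 4) with 4 in C1, C2 by (simpl; lra).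
  replace (INR 1) with 1 in C1, C2 by (simpl; lra).
  rewrite plus_INR in C1, C2. set (b := INR (Bm m A) + INR j) in *.
  assert (Cl : (4 * b + 1) / (4 * G) <= c) by lra.
  assert (Cu : c <= (4 * b + 3) / (4 * G)) by (replace ((4 * b + 3) / (4 * G)) with ((4 * b + 1) / (4 * G) + 2 * / (4 * G)) by (field; lra); lra).
  assert (HP4 : 0 <= INR L * / (4 * G)) by (apply Rmult_le_pos; [lra | left; apply Rinv_0_lt_compat; lra]).
  assert (D : INR L * / (4 * G) <= Rabs (INR Z - INR L * c)).
  { destruct (Nat.le_gt_cases (L * (Bm m A + j)) (Z * 2 ^ Fm m)) as [h|h].
    - assert (h2 : (L * (Bm m A + j + 1) <= Z * 2 ^ Fm m)%nat) by lia.
      apply le_INR in h2. rewrite HB, HZG in h2. replace (INR 1) with 1 in h2 by (simpl; lra).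
      fold b in h2.
      assert (INR L * c <= INR L * ((4 * b + 3) / (4 * G))) by (apply Rmult_le_compat_l; lra).
      assert (INR L * (b + 1) <= INR Z * G) by lra.
      assert (INR L * ((4 * b + 3) / (4 * G)) = INR L * (b + 1) / G - INR L * / (4 * G)) by (field; lra).
      assert (INR L * (b + 1) / G <= INR Z).
      { apply Rmult_le_reg_r with G; auto. replace (INR L * (b + 1) / G * G) with (INR L * (b + 1)) by (field; lra). lra. }
      rewrite Rabs_pos_eq; lra.
    - assert (h2 : (Z * 2 ^ Fm m <= L * (Bm m A + j + 0))%nat) by lia.
      apply le_INR in h2. rewrite HB, HZG in h2. replace (INR 0) with 0 in h2 by (simpl; lra).
      fold b in h2.
      assert (INR L * ((4 * b + 1) / (4 * G)) <= INR L * c) by (apply Rmult_le_compat_l; lra).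
      assert (INR L * ((4 * b + 1) / (4 * G)) = INR L * b / G + INR L * / (4 * G)) by (field; lra).
      assert (INR Z <= INR L * b / G).
      { apply Rmult_le_reg_r with G; auto. replace (INR L * b / G * G) with (INR L * b) by (field; lra). lra. }
      rewrite Rabs_minus_sym. rewrite Rabs_pos_eq; lra. }
  set (x := INR Z - INR L * c) in *.
  assert (Ex : x * x = Rabs x * Rabs x) by (unfold Rabs; destruct (Rcase_abs x); ring).
  rewrite Ex. apply Rmult_le_compat; auto.
Qed.
End U.

Open Scope R_scope.

Lemma U_stage f Hj m : lsum (bernoulli (cval f Hj)) (filter (selU f m) (strs (Lm m))) <= / 2 ^ S m.
Proof.
  set (W := 2 ^ (Fm m + 2)). assert (HW : 0 < W) by (apply pow_lt; lra).
  assert (H2m : 0 < 2 ^ m) by (apply pow_lt; lra).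
  assert (EL : INR (Lm m) = 2 ^ m * (W * W)).
  { unfold Lm, W. rewrite pow_INR. replace (INR 2) with 2 by (simpl; lra).
    replace (2 * (Fm m + 2))%nat with ((Fm m + 2) + (Fm m + 2))%nat by lia. rewrite !pow_add. ring. }
  assert (Eu : um (S m) = / W) by (unfold um, W; rewrite Em_S; auto).
  eapply Rle_trans.
  - apply (chebyshev (cval f Hj) (Lm m) (INR (Lm m) * um (S m)) (selU f m)).
    + apply cval_01.
    + rewrite EL, Eu. apply Rmult_lt_0_compat; [apply Rmult_lt_0_compat; [lra | apply Rmult_lt_0_compat; lra] | apply Rinv_0_lt_compat; auto].
    + intros s Hs Hsel. apply strs_len in Hs. unfold selU in Hsel. apply andb_true_iff in Hsel as [_ Hc].
      apply Nat.eqb_eq in Hc. apply U_dist; auto.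
  - rewrite EL, Eu. simpl (2 ^ S m).
    replace (2 ^ m * (W * W) / 4 / (2 ^ m * (W * W) * / W * (2 ^ m * (W * W) * / W))) with (/ (4 * 2 ^ m))
      by (field; split; lra).
    apply Rinv_le_contravar; lra.
Qed.

Lemma V_stage xi f (Hxi : is_prob_measure xi)
  (Hf : forall s n, Rabs (rat_of_nat (f (code_str s) n) - xi s) <= / 2 ^ n) m :
  lsum xi (filter (selV f m) (strs (Lm m))) <= / 2 ^ S m.
Proof.
  pose proof (stage_good xi f Hxi Hf m (Ast f m)) as [_ H].
  unfold TM in H. erewrite filter_ext_in; [exact H|].
  intros s Hs. apply strs_len in Hs. unfold selV, selj, coreS. rewrite Hs, Nat.eqb_refl. auto.
Qed.

Theorem mainTheorem7 :
  ~ exists xi : list bool -> R,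
      is_prob_measure xi /\ computable_measure xi /\
      forall c : R, 0 <= c <= 1 -> computable_real c ->
        exists X : nat -> bool, MLR xi X /\ MLR (bernoulli c) X.
Proof.
  intros [xi [Hxi [[f [[cx Hcx] Hf]] Hall]]].
  assert (Hj : forall m, (jsel f m (Ast f m) < Km m)%nat).
  { intros m. apply (proj1 (stage_good xi f Hxi Hf m (Ast f m))). }
  assert (Hcr : computable_real (cval f Hj)).
  { exists (gc f). split; [apply (gc_computable cx f Hcx) | apply cval_approx]. }
  destruct (Hall (cval f Hj) (cval_01 f Hj) Hcr) as [X [HX1 HX2]].
  set (Ut := fun n s => (1 <= Ucnt f n (code_str s))%nat).
  set (Vt := fun n s => (1 <= Vcnt f n (code_str s))%nat).
  assert (HU : ML_test (bernoulli (cval f Hj)) Ut).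
  { split; [apply (U_ce cx f Hcx)|]. intros n Ls [Hnd _] Hin.
    apply (union_bound _ (selU f)); auto.
    - intros s. apply bern_nonneg. apply cval_01.
    - intros m s H. unfold selU in H. apply andb_true_iff in H as [H _]. apply Nat.eqb_eq in H. auto.
    - intros m. apply U_stage.
    - intros s Hs. apply Ucnt_iff. apply Hin; auto. }
  assert (HV : ML_test xi Vt).
  { split; [apply (V_ce cx f Hcx)|]. intros n Ls [Hnd _] Hin.
    apply (union_bound _ (selV f)); auto.
    - intros s. apply (xi_nonneg xi Hxi).
    - intros m s H. unfold selV in H. apply andb_true_iff in H as [H _]. apply Nat.eqb_eq in H. auto.
    - intros m. apply (V_stage xi f Hxi Hf).
    - intros s Hs. apply Vcnt_iff. apply Hin; auto. }
  destruct (HX2 Ut HU) as [n1 Hn1]. destruct (HX1 Vt HV) as [n2 Hn2].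
  set (m := S (n1 + n2)). set (s := prefix X (Lm m)).
  assert (Hl : length s = Lm m) by (unfold s, prefix; rewrite length_map, length_seq; auto).
  destruct (coreS f m s =? 0)%nat eqn:E.
  - apply Hn1. exists (Lm m). fold s. unfold Ut. apply Ucnt_iff. exists m. split; [unfold m; lia|].
    unfold selU. rewrite Hl, Nat.eqb_refl, E. auto.
  - apply Hn2. exists (Lm m). fold s. unfold Vt. apply Vcnt_iff. exists m. split; [unfold m; lia|].
    unfold selV. rewrite Hl, Nat.eqb_refl, E. auto.
Qed.
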